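(* Let $f(x)=\frac1n\sum_{i=1}^n f_i(x)$ on $\mathbb{R}^d$, where each $f_i$ is convex and $L_i$-smooth (i.e. $\nabla f_i$ is $L_i$-Lipschitz) and lower bounded, and let $x^*$ be a minimizer of $f$. Consider SGD with the DecSPS stepsize (defined in the context) with a non-decreasing sequence $(c_k)_{k\ge0}$ satisfying $c_k\ge 1$ for all $k\in\mathbb{N}$. Then for every $K\ge1$, $$\mathbb{E}[f(\bar x^K)-f(x^* )]\le \frac{2c_{K-1}\tilde L D^2}{K}+\frac1K\sum_{k=0}^{K-1}\frac{\hat\sigma_B^2}{c_k},$$ where $D^2:=\max_{k\in[K-1]}\|x^k-x^*\|^2$, $\tilde L:=\max\{\max_i L_i,\ \frac{1}{2c_0\gamma_b}\}$, and $\bar x^K=\frac1K\sum_{k=0}^{K-1}x^k$.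
   Context: Minibatches: fix a batch size $B$; at each iteration $k$ a subset $\mathcal{S}_k\subseteq[n]$ with $|\mathcal{S}_k|=B$ is sampled uniformly at random, independently across iterations. For $\mathcal S\subseteq[n]$, $f_{\mathcal S}:=\frac1{|\mathcal S|}\sum_{i\in\mathcal S}f_i$, $f^*_{\mathcal S}:=\inf_x f_{\mathcal S}(x)$, and $\ell^*_{\mathcal S}$ is a given real number with $\ell^*_{\mathcal S}\le f^*_{\mathcal S}$. SGD: $x^{k+1}=x^k-\gamma_k\nabla f_{\mathcal S_k}(x^k)$ from a given $x^0$. DecSPS stepsize: $\gamma_k:=\frac{1}{c_k}\min\left\{\frac{f_{\mathcal S_k}(x^k)-\ell^*_{\mathcal S_k}}{\|\nabla f_{\mathcal S_k}(x^k)\|^2},\ c_{k-1}\gamma_{k-1}\right\}$ for $k\ge0$, with conventions $c_{-1}=c_0$ and $\gamma_{-1}=\gamma_b>0$ (a fixed constant); if $\nabla f_{\mathcal S_k}(x^k)=0$ the iterate is not updated. $\hat\sigma_B^2:=\mathbb{E}_{\mathcal S}[f_{\mathcal S}(x^* )-\ell^*_{\mathcal S}]=f(x^* )-\mathbb{E}_{\mathcal S}[\ell^*_{\mathcal S}]$, where $\mathcal S$ is uniform over subsets of size $B$. $[K-1]$ denotes the iteration indices $\{0,\dots,K-1\}$. *)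

(* Defs.v *)
From HB Require Import structures.
From mathcomp Require Import all_boot all_order all_algebra.
From mathcomp Require Import all_classical all_reals.
From mathcomp Require Import topology normedtype derive.
Set Implicit Arguments. Unset Strict Implicit. Unset Printing Implicit Defensive.
Import Order.TTheory GRing.Theory Num.Theory.
Import numFieldNormedType.Exports.
Local Open Scope ring_scope.

Section DecSPS.
Variables (R : realType) (d n : nat).
Notation vec := 'rV[R]_d.

Definition dotv (u v : vec) : R := \sum_(j < d) u 0 j * v 0 j.
Definition sqnorm (v : vec) : R := dotv v v.
Definition enorm (v : vec) : R := Num.sqrt (sqnorm v).

Definition is_gradient (f : vec -> R) (g : vec -> vec) : Prop :=
  forall x, differentiable f x /\ forall v, 'd f x v = dotv (g x) v.

Definition convex_fun (f : vec -> R) : Prop :=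
  forall (x y : vec) (t : R), 0 <= t <= 1 ->
    f (t *: x + (1 - t) *: y) <= t * f x + (1 - t) * f y.

Definition lipschitz_grad (g : vec -> vec) (L : R) : Prop :=
  forall x y, enorm (g x - g y) <= L * enorm (x - y).

Definition lower_bounded (f : vec -> R) : Prop := exists m, forall x, m <= f x.

Definition favg (fs : 'I_n -> vec -> R) (x : vec) : R :=
  n%:R^-1 * \sum_(i < n) fs i x.

Definition fS (fs : 'I_n -> vec -> R) (S : {set 'I_n}) (x : vec) : R :=
  #|S|%:R^-1 * \sum_(i in S) fs i x.
Definition gS (gs : 'I_n -> vec -> vec) (S : {set 'I_n}) (x : vec) : vec :=
  #|S|%:R^-1 *: \sum_(i in S) gs i x.

(* State = (x^k, gamma_{k-1}).  Convention c_{-1} = c_0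
   (c k.-1 with k = 0), gamma_{-1} = gamma_b.  If the minibatch gradient is
   zero the iterate is not updated and the Polyak term is read as +oo,
   i.e. gamma_k = c_{k-1} gamma_{k-1} / c_k. *)
Definition decsps_step (fs : 'I_n -> vec -> R) (gs : 'I_n -> vec -> vec)
  (lstar : {set 'I_n} -> R) (c : nat -> R) (k : nat) (S : {set 'I_n})
  (st : vec * R) : vec * R :=
  let x := st.1 in let gprev := st.2 in
  let gr := gS gs S x in
  if gr == 0 then (x, (c k)^-1 * (c k.-1 * gprev))
  else
    let gam := (c k)^-1 *
       Num.min ((fS fs S x - lstar S) / sqnorm gr) (c k.-1 * gprev) in
    (x - gam *: gr, gam).

Fixpoint decsps_state (fs : 'I_n -> vec -> R) (gs : 'I_n -> vec -> vec)
  (lstar : {set 'I_n} -> R) (c : nat -> R) (gamma_b : R) (x0 : vec)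
  (w : nat -> {set 'I_n}) (k : nat) : vec * R :=
  match k with
  | 0 => (x0, gamma_b)
  | k'.+1 => decsps_step fs gs lstar c k' (w k')
               (decsps_state fs gs lstar c gamma_b x0 w k')
  end.

Definition decsps_iter fs gs lstar c gamma_b x0 w k : vec :=
  (decsps_state fs gs lstar c gamma_b x0 w k).1.

Definition batch_ok (B : nat) (S : {set 'I_n}) : bool := #|S| == B.

Definition E_batch (B : nat) (X : {set 'I_n} -> R) : R :=
  (\sum_(S : {set 'I_n} | batch_ok B S) X S) / #|[pred S | batch_ok B S]|%:R.

(* expectation over K i.i.d. uniform minibatches S_0, ..., S_{K-1} of size B *)
Definition batch_seq_ok (B K : nat) (t : K.-tuple {set 'I_n}) : bool :=
  all (batch_ok B) t.
Definition E_seq (B K : nat) (X : K.-tuple {set 'I_n} -> R) : R :=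
  (\sum_(t : K.-tuple {set 'I_n} | batch_seq_ok B t) X t)
    / #|[pred t : K.-tuple {set 'I_n} | batch_seq_ok B t]|%:R.

Definition seq_of_tuple (K : nat) (t : K.-tuple {set 'I_n}) : nat -> {set 'I_n} :=
  fun k => nth (finset.set0 : {set 'I_n}) t k.

End DecSPS.

(* Main.v *)
Require Import Defs.
From HB Require Import structures.
From mathcomp Require Import all_boot all_order all_algebra.
From mathcomp Require Import all_classical all_reals.
From mathcomp Require Import topology normedtype derive.
From mathcomp Require Import ring lra.
Set Implicit Arguments. Unset Strict Implicit. Unset Printing Implicit Defensive.
Import Order.TTheory GRing.Theory Num.Theory.
Import numFieldNormedType.Exports.
Local Open Scope ring_scope.


Section An.
Variables (R : realType) (d : nat).
Notation vec := 'rV[R]_d.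

Lemma phi_derive (f : vec -> R) (g : vec -> vec) : is_gradient f g ->
  forall x v t, derivable (fun s : R => f (s *: v + x)) t 1 /\
   'D_1 (fun s : R => f (s *: v + x)) t = dotv (g (t *: v + x)) v.
Proof.
move=> hg x v t; have [df dv] := hg (t *: v + x).
have E : (fun h : R => h^-1 *: (f ((h%:A + t) *: v + x) - f (t *: v + x))) =
   (fun h : R => h^-1 *: (f (h *: v + (t *: v + x)) - f (t *: v + x))).
  apply: funext => h; rewrite scalerDl addrA; congr (_ *: (f (_ + _ + _) - _)).
  by rewrite [h%:A]mulr1.
split.
  by rewrite /derivable /= E; exact: diff_derivable.
by rewrite /derive /= E -/(derive f (t *: v + x) v) deriveE.
Qed.

Local Open Scope classical_set_scope.
Lemma conv_grad (f : vec -> R) (g : vec -> vec) : is_gradient f g -> convex_fun f ->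
  forall x y, f x + dotv (g x) (y - x) <= f y.
Proof.
move=> hg hc x y; set v := y - x.
have [der D] := phi_derive hg x v 0.
rewrite scale0r add0r in D.
rewrite addrC -lerBrDr -D.
move: der; rewrite /derivable /derive => der.
have sub : forall P : set R, (0:R)^' P -> (0:R)^'+ P.
  move=> P; rewrite /dnbhs /within /=; apply: filterS => z Hz zpos.
  by apply: Hz; rewrite gt_eqF.
have cr := cvg_trans (fun P => sub _) der.
apply: (cvgr_to_le cr).
near=> h.
have h0 : 0 < h by near: h; exact: nbhs_right_gt.
have h1 : h < 1 by near: h; exact: nbhs_right_lt.
have E : h *: v + x = h *: y + (1 - h) *: x.
  by rewrite /v scalerBr scalerBl scale1r addrA addrAC.
rewrite /= [h%:A]mulr1 addr0 scale0r add0r E.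
have := hc y x h; rewrite (ltW h0) (ltW h1) => /(_ isT) H.
rewrite ler_pdivrMl //.
rewrite lerBlDr (le_trans H) //; lra.
Unshelve. all: by end_near.
Qed.

Lemma dotvDl (u v w : vec) : dotv (u + v) w = dotv u w + dotv v w.
Proof. by rewrite /dotv -big_split; apply: eq_bigr => j _; rewrite mxE mulrDl. Qed.
Lemma dotvBl (u v w : vec) : dotv (u - v) w = dotv u w - dotv v w.
Proof. by rewrite /dotv -sumrB; apply: eq_bigr => j _; rewrite !mxE mulrBl. Qed.
Lemma dotvZl a (u w : vec) : dotv (a *: u) w = a * dotv u w.
Proof. by rewrite /dotv mulr_sumr; apply: eq_bigr => j _; rewrite mxE mulrA. Qed.
Lemma dotvC (u w : vec) : dotv u w = dotv w u.
Proof. by rewrite /dotv; apply: eq_bigr => j _; rewrite mulrC. Qed.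
Lemma dotvDr (u v w : vec) : dotv w (u + v) = dotv w u + dotv w v.
Proof. by rewrite !(dotvC w) dotvDl. Qed.
Lemma dotvBr (u v w : vec) : dotv w (u - v) = dotv w u - dotv w v.
Proof. by rewrite !(dotvC w) dotvBl. Qed.
Lemma dotvZr a (u w : vec) : dotv w (a *: u) = a * dotv w u.
Proof. by rewrite !(dotvC w) dotvZl. Qed.
Lemma dotv0l (w : vec) : dotv 0 w = 0.
Proof. by rewrite /dotv big1 // => j _; rewrite mxE mul0r. Qed.
Lemma dotv_suml (I : finType) (P : pred I) (u : I -> vec) (w : vec) :
  dotv (\sum_(i | P i) u i) w = \sum_(i | P i) dotv (u i) w.
Proof.
rewrite /dotv exchange_big /=; apply: eq_bigr => j _.
by rewrite summxE mulr_suml.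
Qed.
Lemma sqnorm_ge0 (v : vec) : 0 <= sqnorm v.
Proof. by rewrite /sqnorm /dotv sumr_ge0 // => j _; rewrite -expr2 sqr_ge0. Qed.
Lemma sqnorm_eq0 (v : vec) : sqnorm v = 0 -> v = 0.
Proof.
rewrite /sqnorm /dotv => /eqP; rewrite psumr_eq0 => [/allP H|j _]; last by rewrite -expr2 sqr_ge0.
apply/rowP => j; rewrite mxE; apply/eqP; rewrite -sqrf_eq0 expr2.
by have := H j (mem_index_enum j); rewrite implyTb.
Qed.
Lemma sqnormB (u v : vec) : sqnorm (u - v) = sqnorm u - 2 * dotv u v + sqnorm v.
Proof.
rewrite /sqnorm dotvBl !dotvBr (dotvC v u); ring.
Qed.
Lemma sqnormZ a (v : vec) : sqnorm (a *: v) = a ^+ 2 * sqnorm v.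
Proof. by rewrite /sqnorm dotvZl dotvZr mulrA expr2. Qed.

Lemma cauchy_schwarz (u v : vec) : dotv u v <= enorm u * enorm v.
Proof.
rewrite /enorm -sqrtrM ?sqnorm_ge0 //.
have [V0|Vn0] := eqVneq (sqnorm v) 0.
  rewrite (sqnorm_eq0 V0) dotvC dotv0l; exact: sqrtr_ge0.
have Vp : 0 < sqnorm v by rewrite lt_def Vn0 sqnorm_ge0.
have H := sqnorm_ge0 (u - (dotv u v / sqnorm v) *: v).
rewrite sqnormB sqnormZ dotvZr in H.
have H2 : dotv u v ^+ 2 <= sqnorm u * sqnorm v.
  rewrite -subr_ge0.
  have -> : sqnorm u * sqnorm v - dotv u v ^+ 2 =
     sqnorm v * (sqnorm u - 2 * (dotv u v / sqnorm v * dotv u v) +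
        (dotv u v / sqnorm v) ^+ 2 * sqnorm v).
    by field; rewrite Vn0.
  exact: mulr_ge0 (ltW Vp) H.
apply: (le_trans (ler_norm _)).
by rewrite -sqrtr_sqr ler_sqrt // mulr_ge0 // sqnorm_ge0.
Qed.

Lemma enormZ a (v : vec) : 0 <= a -> enorm (a *: v) = a * enorm v.
Proof. by move=> a0; rewrite /enorm sqnormZ sqrtrM ?sqr_ge0 // sqrtr_sqr ger0_norm. Qed.
Lemma enorm_sq (v : vec) : enorm v * enorm v = sqnorm v.
Proof. by rewrite /enorm -expr2 sqr_sqrtr // sqnorm_ge0. Qed.
Lemma enorm_ge0 (v : vec) : 0 <= enorm v.
Proof. exact: sqrtr_ge0. Qed.

Lemma descent (f : vec -> R) (g : vec -> vec) L : is_gradient f g -> lipschitz_grad g L ->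
  forall x v, f (v + x) <= f x + dotv (g x) v + L / 2 * sqnorm v.
Proof.
move=> hg hL x v.
set a := dotv (g x) v; set b := L / 2 * sqnorm v.
pose phi := fun s : R => f (s *: v + x).
pose p := a \*: (@id R) + b \*: ((@id R) ^+ 2).
have dphi : forall s, is_derive s (1:R) phi (dotv (g (s *: v + x)) v).
  by move=> s; have [h1 h2] := phi_derive hg x v s; exact: DeriveDef.
have dp : forall s, is_derive s (1:R) p (a + b * (2 * s)).
  move=> s; apply: is_derive_eq.
  by change (a * 1 + b * ((2 * s) * 1) = a + b * (2 * s)); rewrite !mulr1.
pose psi := phi - p.
have dpsi : forall s, is_derive s (1:R) psi (dotv (g (s *: v + x)) v - (a + b * (2 * s))).
  by move=> s; apply: is_deriveB.
have cpsi : {within `[0, 1], continuous psi}.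
  apply: continuous_subspaceT => s.
  apply: differentiable_continuous; apply/derivable1_diffP.
  by have [] := dpsi s.
have [c c01 Hc] := MVT ltr01 (fun s _ => dpsi s) cpsi.
have c0 : 0 <= c by move: c01; rewrite in_itv /= => /andP[/ltW].
have Hd : dotv (g (c *: v + x)) v - (a + b * (2 * c)) <= 0.
  rewrite /a opprD addrA -dotvBl subr_le0.
  apply: (le_trans (cauchy_schwarz _ _)).
  have := hL (c *: v + x) x; rewrite addrK enormZ // => H1.
  apply: (le_trans (ler_wpM2r (enorm_ge0 v) H1)).
  rewrite -!mulrA enorm_sq /b.
  by rewrite le_eqVlt; apply/orP; left; apply/eqP; field.
have : psi 1 - psi 0 <= 0 by rewrite Hc subr0 mulr1; exact: Hd.
change (f (1 *: v + x) - (a * 1 + b * (1 ^+ 2)) -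
   (f (0 *: v + x) - (a * 0 + b * (0 ^+ 2))) <= 0 -> f (v + x) <= f x + a + b).
rewrite scale1r scale0r add0r expr1n expr0n /= => H; lra.
Qed.
End An.

Local Close Scope classical_set_scope.
Section Batch.
Variables (R : realType) (d n : nat).
Notation vec := 'rV[R]_d.
Variables (fs : 'I_n -> vec -> R) (gs : 'I_n -> vec -> vec) (L : 'I_n -> R)
  (lstar : {set 'I_n} -> R).
Hypothesis hg : forall i, is_gradient (fs i) (gs i).
Hypothesis hc : forall i, convex_fun (fs i).
Hypothesis hL : forall i, lipschitz_grad (gs i) (L i).
Hypothesis hl : forall (S : {set 'I_n}) x, lstar S <= fS fs S x.

Lemma dotv_gS S x w : dotv (gS gs S x) w = #|S|%:R^-1 * \sum_(i in S) dotv (gs i x) w.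
Proof. by rewrite /gS dotvZl dotv_suml. Qed.

Lemma fS_conv S x y : fS fs S x + dotv (gS gs S x) (y - x) <= fS fs S y.
Proof.
rewrite dotv_gS /fS -mulrDr ler_wpM2l ?invr_ge0 ?ler0n // -big_split /=.
by apply: ler_sum => i _; apply: conv_grad.
Qed.

Lemma fS_desc Lt S x v : 0 <= Lt -> (forall i, L i <= Lt) ->
  fS fs S (v + x) <= fS fs S x + dotv (gS gs S x) v + Lt / 2 * sqnorm v.
Proof.
move=> Lt0 hLt.
have K0 : 0 <= Lt / 2 * sqnorm v by rewrite mulr_ge0 ?divr_ge0 ?sqnorm_ge0.
have H : \sum_(i in S) fs i (v + x) <=
   \sum_(i in S) fs i x + \sum_(i in S) dotv (gs i x) v + #|S|%:R * (Lt / 2 * sqnorm v).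
  rewrite mulr_natl -big_split /= -sumr_const -big_split /=.
  apply: ler_sum => i _; apply: (le_trans (descent (hg i) (hL i) x v)).
  by rewrite lerD2l ler_wpM2r ?sqnorm_ge0 // ler_pM2r // invr_gt0.
rewrite dotv_gS /fS.
have [S0|Sn0] := eqVneq #|S| 0%N.
  rewrite S0 invr0 !mul0r !add0r; exact: K0.
apply: (le_trans (ler_wpM2l _ H)); first by rewrite invr_ge0 ler0n.
by rewrite !mulrDr (mulrA _ #|S|%:R) mulVf ?pnatr_eq0 // mul1r.
Qed.

Lemma polyak_lb Lt S x : 0 < Lt -> (forall i, L i <= Lt) -> gS gs S x != 0 ->
  (2 * Lt)^-1 <= (fS fs S x - lstar S) / sqnorm (gS gs S x).
Proof.
move=> Lt0 hLt gn0.
set g := gS gs S x.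
have Gp : 0 < sqnorm g.
  rewrite lt_def sqnorm_ge0 andbT; apply/eqP => /sqnorm_eq0 g0.
  by move: gn0; rewrite -/g g0 eqxx.
have H := fS_desc S x (- Lt^-1 *: g) (ltW Lt0) hLt.
rewrite dotvZr sqnormZ -/(sqnorm g) in H.
have H2 := hl S (- Lt^-1 *: g + x).
have E : Lt / 2 * ((- Lt^-1) ^+ 2 * sqnorm g) = Lt^-1 / 2 * sqnorm g.
  by field; rewrite gt_eqF.
rewrite E in H.
rewrite ler_pdivlMr // invfM mulrC.
have E2 : sqnorm g * (2^-1 * Lt^-1) = Lt^-1 / 2 * sqnorm g by rewrite mulrC (mulrC 2^-1).
rewrite E2; lra.
Qed.

Lemma step_prop Lt xs (c : nat -> R) k S (st : vec * R) :
  0 < Lt -> (forall i, L i <= Lt) -> (forall k, 1 <= c k) -> (forall k, c k <= c k.+1) ->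
  0 < st.2 -> (2 * Lt)^-1 <= c k.-1 * st.2 ->
  let st' := decsps_step fs gs lstar c k S st in
  [/\ 0 < st'.2, (2 * Lt)^-1 <= c k * st'.2, st'.2 <= st.2 &
   st'.2 * ((2 - (c k)^-1) * (fS fs S st.1 - fS fs S xs) - (fS fs S xs - lstar S) / c k)
     <= sqnorm (st.1 - xs) - sqnorm (st'.1 - xs)].
Proof.
move=> Lt0 hLt c1 cmono; case: st => x gp /= gp0 hm.
have ck0 : 0 < c k by apply: lt_le_trans (c1 k).
have ckn0 : c k != 0 by rewrite gt_eqF.
have cpk : c k.-1 <= c k by case: k {ck0 ckn0 hm} => [|k] //=.
have cp0 : 0 < c k.-1 by apply: lt_le_trans (c1 _).
have m0 : 0 < (2 * Lt)^-1 by rewrite invr_gt0 mulr_gt0.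
have ci1 : (c k)^-1 <= 1 by rewrite invf_le1.
have ci0 : 0 < (c k)^-1 by rewrite invr_gt0.
have hconv := fS_conv S x xs.
have hls := hl S xs.
rewrite /decsps_step /=; case: eqVneq => [g0|gn0] /=.
  have gam0 : 0 < (c k)^-1 * (c k.-1 * gp) by rewrite !mulr_gt0.
  split => //.
  - by rewrite mulVKf.
  - by rewrite ler_pdivrMl // ler_pM2r.
  rewrite subrr; apply: mulr_ge0_le0; first exact: ltW.
  rewrite g0 dotv0l addr0 in hconv.
  have : 0 <= (2 - (c k)^-1) * (fS fs S xs - fS fs S x) by rewrite mulr_ge0 //; lra.
  have : 0 <= (fS fs S xs - lstar S) * (c k)^-1 by rewrite mulr_ge0 //; lra.
  move=> h1 h2; lra.
set g := gS gs S x.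
have Gp : 0 < sqnorm g.
  rewrite lt_def sqnorm_ge0 andbT; apply/eqP => /sqnorm_eq0 g0.
  by move: gn0; rewrite -/g g0 eqxx.
have hP := polyak_lb Lt0 hLt gn0; rewrite -/g in hP.
set P := (fS fs S x - lstar S) / sqnorm g in hP *.
set mu := Num.min P (c k.-1 * gp).
have hmu : (2 * Lt)^-1 <= mu by rewrite le_min hP hm.
have mu0 : 0 < mu by apply: lt_le_trans hmu.
have gam0 : 0 < (c k)^-1 * mu by rewrite mulr_gt0.
split => //.
- by rewrite mulVKf.
- rewrite ler_pdivrMl //; apply: (@le_trans _ _ (c k.-1 * gp)).
    by rewrite ge_min lexx orbT.
  by rewrite ler_pM2r.
set gam := (c k)^-1 * mu.
have E : x - gam *: g - xs = (x - xs) - gam *: g by rewrite addrAC.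
rewrite E [sqnorm (x - xs - _)]sqnormB sqnormZ dotvZr.
set D := dotv (x - xs) g.
have hD : fS fs S x - fS fs S xs <= D.
  rewrite /D dotvC dotvBr; rewrite dotvBr in hconv; lra.
have hG : gam * sqnorm g <= (fS fs S x - lstar S) * (c k)^-1.
  have : gam <= (c k)^-1 * P by rewrite ler_pM2l // ge_min lexx.
  rewrite /P => h; apply: (le_trans (ler_wpM2r (sqnorm_ge0 g) h)).
  by rewrite -mulrA divfK ?gt_eqF // mulrC.
have p1 : 0 <= gam * (D - (fS fs S x - fS fs S xs)) by rewrite mulr_ge0 ?subr_ge0 // ltW.
have p2 : 0 <= gam * ((fS fs S x - lstar S) * (c k)^-1 - gam * sqnorm g)
  by rewrite mulr_ge0 ?subr_ge0 // ltW.
lra.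
Qed.
End Batch.

Section Comb.
Variables (n B : nat).
Local Notation T := {set 'I_n}.

Definition sw (i j x : 'I_n) : 'I_n := if x == i then j else if x == j then i else x.
Lemma swK i j : involutive (sw i j).
Proof.
move=> x; rewrite /sw.
case: (eqVneq x i) => [->|xi]; first by rewrite eqxx; case: eqVneq.
case: (eqVneq x j) => [->|xj]; first by rewrite eqxx.
by rewrite (negbTE xi) (negbTE xj).
Qed.
Lemma sw_inj i j : injective (sw i j).
Proof. exact: (can_inj (swK i j)). Qed.
Definition swS i j (S : T) : T := [set sw i j x | x in S].
Lemma swSK i j : involutive (swS i j).
Proof.
move=> S; apply/setP => x; rewrite /swS.
rewrite -{1}(swK i j x) !mem_imset //; exact: sw_inj.
Qed.

Lemma m_sym (R : realType) i j :
  \sum_(S : T | batch_ok B S) ((i \in S)%:R : R) =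
  \sum_(S : T | batch_ok B S) ((j \in S)%:R : R).
Proof.
rewrite (reindex_inj (can_inj (swSK i j))) /=.
apply: eq_big => S.
  by rewrite /batch_ok /swS card_imset //; exact: sw_inj.
move=> _; have E : sw i j j = i by rewrite /sw eqxx; case: eqVneq.
by rewrite -{1}E /swS mem_imset //; exact: sw_inj.
Qed.

Lemma sum_const_ok (R : realType) (c : R) :
  \sum_(S : T | batch_ok B S) c = #|[pred S : T | batch_ok B S]|%:R * c.
Proof. by rewrite sumr_const mulr_natl. Qed.

Lemma sum_fS (R : realType) (d : nat) (fs : 'I_n -> 'rV[R]_d -> R) y :
  (0 < n)%N -> (0 < B)%N ->
  \sum_(S : T | batch_ok B S) fS fs S y = #|[pred S : T | batch_ok B S]|%:R * favg fs y.
Proof.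
move=> n0 B0.
set m := fun i => \sum_(S : T | batch_ok B S) ((i \in S)%:R : R).
have h1 : \sum_(S | batch_ok B S) fS fs S y = B%:R^-1 * \sum_i m i * fs i y.
  transitivity (\sum_(S | batch_ok B S) \sum_i B%:R^-1 * ((i \in S)%:R * fs i y)).
    apply: eq_bigr => S /eqP hS; rewrite /fS hS mulr_sumr big_mkcond /=.
    by apply: eq_bigr => i _; case: (i \in S); rewrite ?mul1r ?mul0r ?mulr0.
  rewrite exchange_big /= mulr_sumr; apply: eq_bigr => i _.
  by rewrite -mulr_sumr /m mulr_suml.
have h2 : forall i, m i = m (Ordinal n0) by move=> i; apply: m_sym.
have h3 : \sum_i m i = #|[pred S : T | batch_ok B S]|%:R * B%:R.
  rewrite /m exchange_big /= -sum_const_ok.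
  apply: eq_bigr => S /eqP hS; rewrite -hS.
  transitivity (\sum_(i in S) (1:R)); last by rewrite sumr_const.
  by rewrite [RHS]big_mkcond /=; apply: eq_bigr => i _; case: (i \in S).
have hm : m (Ordinal n0) = #|[pred S : T | batch_ok B S]|%:R * B%:R / n%:R.
  rewrite -h3 (eq_bigr _ (fun i _ => h2 i)) sumr_const card_ord -mulr_natl.
  by field; rewrite pnatr_eq0 -lt0n.
rewrite h1 (eq_bigr _ (fun i _ => congr1 (fun z => z * fs i y) (h2 i))) hm.
rewrite -mulr_sumr /favg; field.
by rewrite !pnatr_eq0 -!lt0n n0 B0.
Qed.
End Comb.

Section Tup.
Variables (n K : nat).
Local Notation T := {set 'I_n}.
Local Notation s0 := (finset.set0 : {set 'I_n}).

Definition upd (t : K.-tuple T) (k : nat) (S : T) : K.-tuple T :=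
  [tuple (if val i == k then S else tnth t i) | i < K].

Lemma nth_upd t k S j : (k < K)%N ->
  nth s0 (upd t k S) j = if j == k then S else nth s0 t j.
Proof.
move=> kK; case: (ltnP j K) => jK.
  rewrite (_ : nth s0 (upd t k S) j = tnth (upd t k S) (Ordinal jK)); last first.
    by rewrite (tnth_nth s0).
  by rewrite tnth_mktuple /=; case: eqP => // _; rewrite (tnth_nth s0).
have jk : j != k by apply/eqP => E; move: kK; rewrite -E ltnNge jK.
by rewrite !nth_default ?size_tuple // (negbTE jk).
Qed.

Lemma upd_upd t k S : (k < K)%N -> upd (upd t k S) k (nth s0 t k) = t.
Proof.
move=> kK; apply: eq_from_tnth => i; rewrite !tnth_mktuple.
by case: eqP => [<-|//]; rewrite (tnth_nth s0).
Qed.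

Lemma ok_upd B t k S : (k < K)%N ->
  batch_seq_ok B (upd t k S) && batch_ok B (nth s0 t k) =
  batch_seq_ok B t && batch_ok B S.
Proof.
move=> kK; rewrite /batch_seq_ok.
apply/andP/andP => [[/all_tnthP h1 h2]|[/all_tnthP h1 h2]]; split.
- apply/all_tnthP => i; have := h1 i; rewrite tnth_mktuple.
  by case: eqP => [E _|//]; rewrite (tnth_nth s0) E.
- by have := h1 (Ordinal kK); rewrite tnth_mktuple /= eqxx.
- by apply/all_tnthP => i; rewrite tnth_mktuple; case: ifP.
- by have := h1 (Ordinal kK); rewrite (tnth_nth s0).
Qed.

Lemma resample B (R : realType) (H : K.-tuple T -> R) k : (k < K)%N ->
  \sum_(t | batch_seq_ok B t) \sum_(S : T | batch_ok B S) H (upd t k S) =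
  \sum_(t | batch_seq_ok B t) \sum_(S : T | batch_ok B S) H t.
Proof.
move=> kK; rewrite !pair_big_dep /=.
pose phi := fun p : K.-tuple T * T => (upd p.1 k p.2, nth s0 p.1 k).
have phiK : involutive phi.
  by move=> [t S]; rewrite /phi /= nth_upd // eqxx upd_upd.
rewrite [RHS](reindex_inj (can_inj phiK)) /=.
by apply: eq_big => [[t S]|[t S] _] //=; rewrite ok_upd.
Qed.

Lemma resample2 B (R : realType) (V : Type) (X : K.-tuple T -> V) (Phi : V -> T -> R) k :
  (k < K)%N -> (forall t S, X (upd t k S) = X t) ->
  \sum_(t | batch_seq_ok B t) \sum_(S : T | batch_ok B S) Phi (X t) S =
  #|[pred S : T | batch_ok B S]|%:R * \sum_(t | batch_seq_ok B t) Phi (X t) (nth s0 t k).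
Proof.
move=> kK hX.
transitivity (\sum_(t | batch_seq_ok B t) \sum_(S : T | batch_ok B S)
   (fun t => Phi (X t) (nth s0 t k)) (upd t k S)).
  apply: eq_bigr => t _; apply: eq_bigr => S _.
  by rewrite /= hX nth_upd // eqxx.
rewrite (resample B (fun t => Phi (X t) (nth s0 t k)) kK) mulr_sumr; apply: eq_bigr => t _.
by rewrite sum_const_ok.
Qed.
End Tup.

Lemma state_prefix (R : realType) (d n : nat) fs gs lstar c (gb : R) (x0 : 'rV[R]_d)
  (w w' : nat -> {set 'I_n}) k :
  (forall j, (j < k)%N -> w j = w' j) ->
  decsps_state fs gs lstar c gb x0 w k = decsps_state fs gs lstar c gb x0 w' k.
Proof.
elim: k => [//|k IH] h /=.
by rewrite h // IH // => j jk; apply: h; rewrite ltnS ltnW.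
Qed.

Lemma telescope (R : realType) (a gam h : nat -> R) D K :
  (forall k, 0 < gam k) -> (forall k, gam k.+1 <= gam k) ->
  (forall k, gam k * h k <= a k - a k.+1) ->
  (forall k, (k < K)%N -> a k <= D) -> (0 < K)%N ->
  \sum_(k < K) h k <= (D - a K) / gam K.-1.
Proof.
move=> g0 gm hs; elim: K => [//|K IH] hD _.
rewrite big_ord_recr /=.
have hK : h K <= (a K - a K.+1) / gam K by rewrite ler_pdivlMr // mulrC.
case: K IH hD hK => [|K] IH hD hK.
  rewrite big_ord0 add0r; apply: (le_trans hK).
  by rewrite ler_pM2r ?invr_gt0 // lerD2r; apply: hD.
have H1 := IH (fun k kk => hD k (ltnW kk)) isT; rewrite /= in H1.
have inv : (gam K)^-1 <= (gam K.+1)^-1 by rewrite lef_pV2 ?posrE.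
have DK : 0 <= D - a K.+1 by rewrite subr_ge0 hD.
have := ler_wpM2l DK inv => H2.
move: H1 hK H2; rewrite /= !mulrBl => H1 hK H2; lra.
Qed.

Lemma jensen (R : realType) (d : nat) (f : 'rV[R]_d -> R) : convex_fun f ->
  forall K (y : nat -> 'rV[R]_d), (0 < K)%N ->
  f (K%:R^-1 *: \sum_(k < K) y k) <= K%:R^-1 * \sum_(k < K) f (y k).
Proof.
move=> hc; elim => [//|K IH] y _.
case: K IH => [|K] IH.
  by rewrite !big_ord_recr /= !big_ord0 !add0r invr1 scale1r mul1r.
have IH' := IH y isT.
set t := (K.+2%:R : R)^-1.
have K0 : (0 : R) < K.+1%:R by rewrite ltr0n.
have t01 : 0 <= t <= 1.
  by rewrite /t invr_ge0 ler0n /= invf_le1 ?ltr0n // ler1n.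
have E : K.+2%:R^-1 *: \sum_(k < K.+2) y k =
   t *: y K.+1 + (1 - t) *: (K.+1%:R^-1 *: \sum_(k < K.+1) y k).
  rewrite big_ord_recr /= scalerDr scalerA addrC; congr (_ + _).
  congr (_ *: _); rewrite /t -[K.+2]addn1 natrD; field.
  have Kp : (0:R) <= K%:R := ler0n _ _.
  have p1 : (0:R) < 1 + K%:R by lra.
  have p2 : (0:R) < 1 + K%:R + 1 by lra.
  by rewrite (gt_eqF p1) (gt_eqF p2).
rewrite E; apply: (le_trans (hc _ _ _ t01)).
have t1 : 0 <= 1 - t by move: t01 => /andP[_]; rewrite subr_ge0.
apply: (le_trans (lerD (lexx _) (ler_wpM2l t1 IH'))).
rewrite [in X in _ <= X]big_ord_recr /= mulrDr mulrA le_eqVlt; apply/orP; left; apply/eqP.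
rewrite addrC; congr (_ + _).
congr (_ * _); rewrite /t -[K.+2]addn1 natrD; field.
have Kp : (0:R) <= K%:R := ler0n _ _.
have p1 : (0:R) < 1 + K%:R by lra.
have p2 : (0:R) < 1 + K%:R + 1 by lra.
by rewrite (gt_eqF p1) (gt_eqF p2).
Qed.

Lemma favg_conv (R : realType) (d n : nat) (fs : 'I_n -> 'rV[R]_d -> R) :
  (forall i, convex_fun (fs i)) -> convex_fun (favg fs).
Proof.
move=> hc x y t t01; rewrite /favg mulrCA (mulrCA (1 - t)) -mulrDr.
rewrite ler_wpM2l ?invr_ge0 ?ler0n // !mulr_sumr -big_split /=.
by apply: ler_sum => i _; apply: hc.
Qed.

Section Main.
Variables (R : realType) (d n : nat).
Notation vec := 'rV[R]_d.
Variables (fs : 'I_n -> vec -> R) (gs : 'I_n -> vec -> vec) (L : 'I_n -> R)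
  (lstar : {set 'I_n} -> R) (xs x0 : vec) (c : nat -> R) (gb Lt : R).
Hypothesis hg : forall i, is_gradient (fs i) (gs i).
Hypothesis hc : forall i, convex_fun (fs i).
Hypothesis hL : forall i, lipschitz_grad (gs i) (L i).
Hypothesis hl : forall (S : {set 'I_n}) x, lstar S <= fS fs S x.
Hypothesis Lt0 : 0 < Lt.
Hypothesis hLt : forall i, L i <= Lt.
Hypothesis c1 : forall k, 1 <= c k.
Hypothesis cm : forall k, c k <= c k.+1.
Hypothesis gb0 : 0 < gb.
Hypothesis hbase : (2 * Lt)^-1 <= c 0 * gb.

Definition hterm (x : vec) (S : {set 'I_n}) k :=
  (2 - (c k)^-1) * (fS fs S x - fS fs S xs) - (fS fs S xs - lstar S) / c k.

Lemma pathwise (w : nat -> {set 'I_n}) K : (0 < K)%N ->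
  \sum_(k < K) hterm (decsps_state fs gs lstar c gb x0 w k).1 (w k) k <=
  2 * c K.-1 * Lt * \big[Num.max/0]_(k < K) sqnorm ((decsps_state fs gs lstar c gb x0 w k).1 - xs).
Proof.
move=> K0; set st := decsps_state fs gs lstar c gb x0 w.
have inv : forall k, 0 < (st k).2 /\ (2 * Lt)^-1 <= c k.-1 * (st k).2.
  elim => [|k [IH1 IH2]]; first by split.
  have [h1 h2 _ _] := step_prop hg hc hL hl xs (w k) Lt0 hLt c1 cm IH1 IH2.
  by split.
set D := \big[Num.max/0]_(k < K) sqnorm ((st k).1 - xs).
have hT := @telescope R (fun k => sqnorm ((st k).1 - xs)) (fun k => (st k.+1).2)
   (fun k => hterm (st k).1 (w k) k) D K.
have T := hT (fun k => (inv k.+1).1).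
have T2 : \sum_(k < K) hterm (st k).1 (w k) k <=
    (D - sqnorm ((st K).1 - xs)) / (st K.-1.+1).2.
  apply: T => //.
  - move=> k; have [IH1 IH2] := inv k.+1.
    by have [_ _ h3 _] := step_prop hg hc hL hl xs (w k.+1) Lt0 hLt c1 cm IH1 IH2.
  - move=> k; have [IH1 IH2] := inv k.
    by have [_ _ _ h4] := step_prop hg hc hL hl xs (w k) Lt0 hLt c1 cm IH1 IH2.
  - move=> k kK; rewrite /D.
    exact: (le_bigmax 0 (fun k : 'I_K => sqnorm ((st k).1 - xs)) (Ordinal kK)).
rewrite prednK // in T2.
have [g0 gm] := inv K.
have D0 : 0 <= D.
  apply: le_trans (le_bigmax 0 (fun k : 'I_K => sqnorm ((st k).1 - xs)) (Ordinal K0)).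
  exact: sqnorm_ge0.
apply: (le_trans T2).
have a0 := sqnorm_ge0 ((st K).1 - xs).
have i1 : (st K).2^-1 <= 2 * Lt * c K.-1.
  rewrite -div1r ler_pdivrMr //.
  have := ler_wpM2l (ltW (mulr_gt0 (ltr0Sn _ 1) Lt0)) gm.
  rewrite mulfV ?gt_eqF ?mulr_gt0 //; lra.
have H1 : (D - sqnorm ((st K).1 - xs)) / (st K).2 <= D * (2 * Lt * c K.-1).
  apply: (le_trans (ler_wpM2r _ (_ : D - sqnorm ((st K).1 - xs) <= D))).
  - by rewrite invr_ge0 ltW.
  - lra.
  - by apply: ler_wpM2l.
apply: (le_trans H1); lra.
Qed.
End Main.


Section Final.
Variables (R : realType) (d n : nat).
Notation vec := 'rV[R]_d.
Local Notation s0 := (finset.set0 : {set 'I_n}).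
Variables (fs : 'I_n -> vec -> R) (gs : 'I_n -> vec -> vec) (L : 'I_n -> R)
  (lstar : {set 'I_n} -> R) (xs x0 : vec) (B : nat) (c : nat -> R) (gb : R) (K : nat).
Hypothesis n0 : (0 < n)%N.
Hypothesis B0 : (0 < B)%N.
Hypothesis Bn : (B <= n)%N.
Hypothesis hg : forall i, is_gradient (fs i) (gs i).
Hypothesis hc : forall i, convex_fun (fs i).
Hypothesis hL : forall i, lipschitz_grad (gs i) (L i).
Hypothesis hl : forall (S : {set 'I_n}) x, lstar S <= fS fs S x.
Hypothesis hmin : forall x, favg fs xs <= favg fs x.
Hypothesis gb0 : 0 < gb.
Hypothesis c1 : forall k, 1 <= c k.
Hypothesis cm : forall k, c k <= c k.+1.
Hypothesis K1 : (0 < K)%N.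

Local Notation xx t k := (decsps_iter fs gs lstar c gb x0 (seq_of_tuple t) k).
Local Notation Nb := (#|[pred S : {set 'I_n} | batch_ok B S]|%:R : R).
Local Notation N := (#|[pred t : K.-tuple {set 'I_n} | batch_seq_ok B t]|%:R : R).

Lemma Nb_gt0 : 0 < Nb.
Proof.
rewrite ltr0n.
have : (0 < #|[set A : {set 'I_n} | #|A| == B]|)%N by rewrite card_draws card_ord bin_gt0.
case/card_gt0P => S; rewrite inE => hS.
by apply/card_gt0P; exists S; rewrite inE.
Qed.

Lemma N_gt0 : 0 < N.
Proof.
rewrite ltr0n.
have : (0 < #|[set A : {set 'I_n} | #|A| == B]|)%N by rewrite card_draws card_ord bin_gt0.
case/card_gt0P => S; rewrite inE => hS.
apply/card_gt0P; exists [tuple of nseq K S].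
by rewrite inE /batch_seq_ok /= all_nseq /batch_ok hS orbT.
Qed.

Lemma sum_const_seq (a : R) :
  \sum_(t : K.-tuple {set 'I_n} | batch_seq_ok B t) a = N * a.
Proof. by rewrite sumr_const mulr_natl. Qed.

Lemma sum_hterm y k :
  \sum_(S : {set 'I_n} | batch_ok B S) hterm fs lstar xs c y S k =
  Nb * ((2 - (c k)^-1) * (favg fs y - favg fs xs) - (favg fs xs - E_batch B lstar) / c k).
Proof.
rewrite /hterm sumrB -mulr_sumr -mulr_suml !sumrB !sum_fS // /E_batch.
have := Nb_gt0; set nb := Nb => nb0.
have ck : 0 < c k by apply: lt_le_trans (c1 k).
field; by rewrite !gt_eqF.
Qed.

Lemma xx_upd (t : K.-tuple {set 'I_n}) k S : (k < K)%N -> xx (upd t k S) k = xx t k.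
Proof.
move=> kK; rewrite /decsps_iter; congr (_.1); apply: state_prefix => j jk.
by rewrite /seq_of_tuple nth_upd // (ltn_eqF jk).
Qed.

Lemma sum_k_eq k : (k < K)%N ->
  \sum_(t : K.-tuple {set 'I_n} | batch_seq_ok B t) hterm fs lstar xs c (xx t k) (nth s0 t k) k =
  \sum_(t : K.-tuple {set 'I_n} | batch_seq_ok B t) ((2 - (c k)^-1) * (favg fs (xx t k) - favg fs xs)
      - (favg fs xs - E_batch B lstar) / c k).
Proof.
move=> kK.
have := @resample2 n K B R _ (fun t => xx t k) (fun y S => hterm fs lstar xs c y S k) k kK
   (fun t S => xx_upd t S kK).
under eq_bigr do rewrite sum_hterm.
rewrite -mulr_sumr => /mulfI -> //.
by rewrite gt_eqF // Nb_gt0.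
Qed.



Lemma core :
  E_seq B (fun t : K.-tuple {set 'I_n} => favg fs (K%:R^-1 *: \sum_(k < K) xx t k) - favg fs xs)
  <= 2 * c K.-1 * Num.max (\big[Num.max/0]_(i < n) L i) (1 / (2 * c 0%N * gb)) *
       E_seq B (fun t : K.-tuple {set 'I_n} => \big[Num.max/0]_(k < K) sqnorm (xx t k - xs)) / K%:R
     + K%:R^-1 * \sum_(k < K) (favg fs xs - E_batch B lstar) / c k.
Proof.
set Lt := Num.max _ _.
have c0 : 0 < c 0 by apply: lt_le_trans (c1 0).
have Lt_ge : 1 / (2 * c 0 * gb) <= Lt by rewrite le_max lexx orbT.
have P0 : 0 < 2 * c 0 * gb by rewrite !mulr_gt0.
have Lt0 : 0 < Lt by apply: lt_le_trans Lt_ge; rewrite div1r invr_gt0.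
have hLt : forall i, L i <= Lt.
  move=> i; apply: le_trans (le_bigmax 0 L i) _; rewrite le_max lexx //.
have hbase : (2 * Lt)^-1 <= c 0 * gb.
  move: Lt_ge; rewrite div1r => h.
  have h2 : 1 <= 2 * c 0 * gb * Lt.
    by have := ler_wpM2l (ltW P0) h; rewrite mulfV ?gt_eqF.
  rewrite -div1r ler_pdivrMr ?mulr_gt0 //; lra.
set sig := favg fs xs - E_batch B lstar.
have Npos := N_gt0.
have KR : (0:R) < K%:R by rewrite ltr0n.
have P : forall t : K.-tuple {set 'I_n},
    \sum_(k < K) hterm fs lstar xs c (xx t k) (nth s0 t k) k <=
    2 * c K.-1 * Lt * \big[Num.max/0]_(k < K) sqnorm (xx t k - xs).
  by move=> t; apply: pathwise.
set A := \sum_(t : K.-tuple {set 'I_n} | batch_seq_ok B t)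
            (favg fs (K%:R^-1 *: \sum_(k < K) xx t k) - favg fs xs).
set Dsum := \sum_(t : K.-tuple {set 'I_n} | batch_seq_ok B t)
            \big[Num.max/0]_(k < K) sqnorm (xx t k - xs).
set Csum := \sum_(k < K) sig / c k.
set Hsum := \sum_(t : K.-tuple {set 'I_n} | batch_seq_ok B t)
   \sum_(k < K) hterm fs lstar xs c (xx t k) (nth s0 t k) k.
have S1 : A <= \sum_(t : K.-tuple {set 'I_n} | batch_seq_ok B t)
                K%:R^-1 * \sum_(k < K) (favg fs (xx t k) - favg fs xs).
  apply: ler_sum => t _.
  have J := jensen (favg_conv hc) (fun k => xx t k) K1.
  rewrite sumrB sumr_const card_ord mulrBr -[favg fs xs *+ K]mulr_natl mulrA mulVf ?gt_eqF // mul1r.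
  by rewrite lerD2r.
have S2 : forall (t : K.-tuple {set 'I_n}) (k : nat),
   favg fs (xx t k) - favg fs xs <=
   ((2 - (c k)^-1) * (favg fs (xx t k) - favg fs xs) - sig / c k) + sig / c k.
  move=> t k; have e0 : 0 <= favg fs (xx t k) - favg fs xs by rewrite subr_ge0.
  have ci : (c k)^-1 <= 1 by rewrite invf_le1 // (lt_le_trans ltr01 (c1 k)).
  have := mulr_ge0 e0 (_ : 0 <= 1 - (c k)^-1); rewrite subr_ge0 => /(_ ci) h.
  lra.
have Eq : \sum_(t : K.-tuple {set 'I_n} | batch_seq_ok B t) \sum_(k < K)
     ((2 - (c k)^-1) * (favg fs (xx t k) - favg fs xs) - sig / c k) = Hsum.
  rewrite /Hsum [LHS]exchange_big [RHS]exchange_big /=; apply: eq_bigr => k _.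
  by rewrite sum_k_eq.
have S3 : \sum_(t : K.-tuple {set 'I_n} | batch_seq_ok B t)
                K%:R^-1 * \sum_(k < K) (favg fs (xx t k) - favg fs xs)
          <= K%:R^-1 * (Hsum + N * Csum).
  rewrite -mulr_sumr; apply: ler_wpM2l; first by rewrite invr_ge0 ltW.
  apply: (@le_trans _ _ (\sum_(t : K.-tuple {set 'I_n} | batch_seq_ok B t) \sum_(k < K)
     (((2 - (c k)^-1) * (favg fs (xx t k) - favg fs xs) - sig / c k) + sig / c k))).
    by apply: ler_sum => t _; apply: ler_sum => k _; exact: S2.
  under eq_bigr do rewrite big_split /=.
  rewrite big_split /= Eq sum_const_seq.
  by [].
have S4 : Hsum <= 2 * c K.-1 * Lt * Dsum.
  by rewrite /Dsum mulr_sumr; apply: ler_sum => t _; exact: P.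
rewrite /E_seq -/A -/Dsum ler_pdivrMr //.
apply: (le_trans S1); apply: (le_trans S3).
have -> : (2 * c K.-1 * Lt * (Dsum / N) / K%:R + K%:R^-1 * Csum) * N =
   K%:R^-1 * (2 * c K.-1 * Lt * Dsum + N * Csum).
  by field; rewrite !gt_eqF.
by apply: ler_wpM2l; [rewrite invr_ge0 ltW | rewrite lerD2r].
Qed.
End Final.
Unset Implicit Arguments.
Theorem theorem3 (R : realType) (d n : nat)
  (fs : 'I_n -> 'rV[R]_d -> R) (gs : 'I_n -> 'rV[R]_d -> 'rV[R]_d)
  (L : 'I_n -> R) (lstar : {set 'I_n} -> R) (xstar x0 : 'rV[R]_d)
  (B : nat) (c : nat -> R) (gamma_b : R) (K : nat) :
  (0 < n)%N -> (0 < B)%N -> (B <= n)%N ->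
  (forall i, is_gradient (fs i) (gs i)) ->
  (forall i, convex_fun (fs i)) ->
  (forall i, lipschitz_grad (gs i) (L i)) ->
  (forall i, lower_bounded (fs i)) ->
  (forall S : {set 'I_n}, forall x, lstar S <= fS fs S x) ->
  (forall x, favg fs xstar <= favg fs x) ->
  0 < gamma_b ->
  (forall k, 1 <= c k) ->
  (forall k, c k <= c k.+1) ->
  (1 <= K)%N ->
  let x := fun (t : K.-tuple {set 'I_n}) (k : nat) =>
             decsps_iter fs gs lstar c gamma_b x0 (seq_of_tuple t) k in
  let xbar := fun t => K%:R^-1 *: \sum_(k < K) x t k in
  let D2 := fun t => \big[Num.max/0]_(k < K) sqnorm (x t k - xstar) in
  let Lmax := \big[Num.max/0]_(i < n) L i in
  let Ltil := Num.max Lmax (1 / (2 * c 0%N * gamma_b)) in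
  let sigma2 := favg fs xstar - E_batch B lstar in
  E_seq B (fun t => favg fs (xbar t) - favg fs xstar)
  <= 2 * c K.-1 * Ltil * E_seq B D2 / K%:R
     + K%:R^-1 * \sum_(k < K) sigma2 / c k.
Proof.
move=> n0 B0 Bn hg hc hL _ hl hmin gb0 c1 cm K1.
by apply: core.
Qed.
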